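(* Let $n\in\mathbb{N}$. Two points $A,B\in\mathbb{Q}\cup\{\infty\}$ are neighbours in both $\mathcal{F}$ and $\frac1n\mathcal{F}$ if and only if they can be written in reduced form as $A=\frac{a}{n_1c}$ and $B=\frac{b}{n_2d}$ with $n=n_1n_2$ and $|an_2d-bn_1c|=1$.
   Context: The Farey tessellation $\mathcal{F}$ is the ideal triangulation of the upper half-plane $\mathbb{H}$ whose vertex set is $\mathbb{Q}\cup\{\infty\}$ (with $\infty=\frac10$) and in which two vertices written in reduced form $\frac pq,\frac rs$ are joined by a geodesic edge (are \emph{neighbours} in $\mathcal{F}$) iff $|ps-qr|=1$. $\frac1n\mathcal{F}$ is the image of $\mathcal{F}$ under the isometry $z\mapsto z/n$; thus $A,B$ are neighbours in $\frac1n\mathcal{F}$ iff $nA,nB$ are neighbours in $\mathcal{F}$. *)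

(* Defs.v *)
From mathcomp Require Import all_boot all_order all_algebra.
Set Implicit Arguments. Unset Strict Implicit. Unset Printing Implicit Defensive.
Import Order.TTheory GRing.Theory Num.Theory.
Local Open Scope ring_scope.

(* Q ∪ {∞}: [Some x] is the rational x, [None] is ∞ = 1/0. *)
Definition qinf := option rat.

Definition pnum (A : qinf) : int := if A is Some x then numq x else 1.
Definition pden (A : qinf) : int := if A is Some x then denq x else 0.

Definition farey_nbr (A B : qinf) : Prop :=
  `|pnum A * pden B - pden A * pnum B| = 1.

Definition qscale (n : nat) (A : qinf) : qinf :=
  if A is Some x then Some (n%:Q * x) else None.

(* Neighbours in (1/n) F: nA, nB are neighbours in F. *)
Definition farey_nbr_n (n : nat) (A B : qinf) : Prop :=
  farey_nbr (qscale n A) (qscale n B).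

(* p/q is a reduced-form expression of A (p, q coprime integers, possibly
   with q negative; q = 0 means A = ∞). *)
Definition reduced_repr (p q : int) (A : qinf) : Prop :=
  coprimez p q /\
  match A with
  | None => q = 0
  | Some x => q != 0 /\ x = p%:~R / q%:~R
  end.

(* Main.v *)
Require Import Defs.
From mathcomp Require Import all_boot all_order all_algebra.
Import Order.TTheory GRing.Theory Num.Theory.
Local Open Scope ring_scope.
From mathcomp Require Import zify ring lra.

Lemma repr_sign (p q : int) (A : qinf) : reduced_repr p q A ->
  exists e : int, `|e| = 1 /\ p = e * pnum A /\ q = e * pden A.
Proof.
case: A => [x|] [cop H] /=.
- case: H => qn0 ->.
  have cop' : coprime `|p| `|q| by rewrite -coprimezE.
  rewrite coprimeq_num // coprimeq_den // (negbTE qn0).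
  exists (Num.sg q); split; first by rewrite normr_sg qn0.
  split.
    rewrite mulrA -expr2 sqr_sg qn0 mul1r //.
  by rewrite mulr_sg_norm.
- subst q. move: cop; rewrite /coprimez gcdz0 => /eqP hp.
  exists p; split; first by rewrite -hp.
  by rewrite mulr1 mulr0.
Qed.

Lemma repr_canon (A : qinf) : reduced_repr (pnum A) (pden A) A.
Proof.
case: A => [x|] /=; split => //.
- by rewrite coprimezE coprime_num_den.
- by rewrite denq_neq0 divq_num_den.
Qed.

Lemma nbr_repr p q r s A B : reduced_repr p q A -> reduced_repr r s B ->
  (farey_nbr A B <-> `|p * s - q * r| = 1).
Proof.
move=> /repr_sign [e1 [h1 [-> ->]]] /repr_sign [e2 [h2 [-> ->]]].
rewrite /farey_nbr.
have -> : e1 * pnum A * (e2 * pden B) - e1 * pden A * (e2 * pnum B)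
  = (e1 * e2) * (pnum A * pden B - pden A * pnum B) by ring.
rewrite normrM normrM h1 h2 !mul1r //.
Qed.
Arguments nbr_repr {p q r s A B}.

Lemma scale_repr (n : nat) p q A (g n' c : int) :
  reduced_repr p q A -> n%:Z = g * n' -> q = g * c -> coprimez n' c -> g != 0 ->
  reduced_repr (n' * p) c (qscale n A).
Proof.
move=> [cop H] hn hq cnc gn0.
have cpc : coprimez p c by move: cop; rewrite hq coprimezMr => /andP[].
split; first by rewrite coprimezMl cnc cpc.
case: A H => [x|] /=.
- case=> qn0 ->.
  have cn0 : c != 0 by apply: contraNneq qn0 => c0; rewrite hq c0 mulr0.
  split => //.
  rewrite hn hq !intrM.
  have gn0' : (g%:~R : rat) != 0 by rewrite intr_eq0.
  have cn0' : (c%:~R : rat) != 0 by rewrite intr_eq0.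
  field. by rewrite gn0' cn0'.
- move=> q0. move: q0; rewrite hq => /eqP; rewrite mulf_eq0 (negbTE gn0) /= => /eqP //.
Qed.
Arguments scale_repr {n p q A g n' c}.

Theorem lemma3p7 (n : nat) (A B : qinf) : (0 < n)%N ->
  (farey_nbr A B /\ farey_nbr_n n A B) <->
  exists (n1 n2 : nat) (a b c d : int),
    n = (n1 * n2)%N /\
    reduced_repr a (n1%:Z * c) A /\
    reduced_repr b (n2%:Z * d) B /\
    `|a * n2%:Z * d - b * n1%:Z * c| = 1.
Proof.
move=> n0; split.
- move=> [F Fn].
  set p := pnum A; set q := pden A; set r := pnum B; set s := pden B.
  have RA := repr_canon A; have RB := repr_canon B.
  have Y : `|p * s - q * r| = 1 by rewrite -(nbr_repr RA RB).
  set g := gcdz n q; set h := gcdz n s.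
  set n' := (n%:Z %/ g)%Z; set c := (q %/ g)%Z.
  set m' := (n%:Z %/ h)%Z; set d := (s %/ h)%Z.
  have gn0 : g != 0 by rewrite /g gcdz_eq0 negb_and; apply/orP; left; move: n0; clear; move=> n0; apply/eqP; lia.
  have hn0 : h != 0 by rewrite /h gcdz_eq0 negb_and; apply/orP; left; move: n0; clear; move=> n0; apply/eqP; lia.
  have g0 : 0 <= g by rewrite /g.
  have h0 : 0 <= h by rewrite /h.
  have En : n%:Z = g * n' by rewrite mulrC divzK // dvdz_gcdl.
  have Eq : q = g * c by rewrite mulrC divzK // dvdz_gcdr.
  have Em : n%:Z = h * m' by rewrite mulrC divzK // dvdz_gcdl.
  have Es : s = h * d by rewrite mulrC divzK // dvdz_gcdr.
  have cop1 : coprimez n' c.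
    have := mulz_gcdl n' c g. rewrite -[_ * g]mulrC -[c * g]mulrC -En -Eq -/g.
    rewrite gez0_abs // => E.
    rewrite /coprimez; apply/eqP; apply: (mulIf gn0); by rewrite mul1r.
  have cop2 : coprimez m' d.
    have := mulz_gcdl m' d h. rewrite -[_ * h]mulrC -[d * h]mulrC -Em -Es -/h.
    rewrite gez0_abs // => E.
    rewrite /coprimez; apply/eqP; apply: (mulIf hn0); by rewrite mul1r.
  have RA' := scale_repr RA En Eq cop1 gn0.
  have RB' := scale_repr RB Em Es cop2 hn0.
  have X : `|n' * p * d - c * (m' * r)| = 1 by rewrite -(nbr_repr RA' RB').
  have E : g * h * (n' * p * d - c * (m' * r)) = n%:Z * (p * s - q * r).
    have -> : g * h * (n' * p * d - c * (m' * r)) = (g * n') * h * p * d - g * c * (h * m') * r by ring.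
    rewrite -En -Em Es Eq; ring.
  exists `|g|%N, `|h|%N, p, r, c, d.
  have E' : g * h = n%:Z.
    have := congr1 (fun z => `|z|) E; rewrite /= !normrM X Y !mulr1.
    by rewrite (ger0_norm g0) (ger0_norm h0).
  split; first by move: E' g0 h0; clear; move=> E' g0 h0; nia.
  split; first by rewrite gez0_abs // -Eq.
  split; first by rewrite gez0_abs // -Es.
  rewrite !gez0_abs //.
  have -> : p * h * d - r * g * c = p * s - q * r by rewrite Es Eq; ring.
  exact: Y.
- move=> [n1 [n2 [a [b [c [d [En [RA [RB X]]]]]]]]].
  split; first by rewrite (nbr_repr RA RB); rewrite -X; congr (`|_|); ring.
  have n1n0 : n1%:Z != 0 by apply/eqP; move: En n0; clear; move=> En n0; lia.
  have n2n0 : n2%:Z != 0 by apply/eqP; move: En n0; clear; move=> En n0; lia.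
  have XX : (a * n2%:Z * d - b * n1%:Z * c) ^+ 2 = 1.
    move: X; clear; move=> X; rewrite expr2; nia.
  have c1 : coprimez n2%:Z c.
    apply/coprimezP.
    exists ((a * n2%:Z * d - b * n1%:Z * c) * a * d,
            - ((a * n2%:Z * d - b * n1%:Z * c) * b * n1%:Z)) => /=.
    rewrite -XX expr2; ring.
  have c2 : coprimez n1%:Z d.
    apply/coprimezP.
    exists (- ((a * n2%:Z * d - b * n1%:Z * c) * b * c),
            (a * n2%:Z * d - b * n1%:Z * c) * a * n2%:Z) => /=.
    rewrite -XX expr2; ring.
  have RA' : reduced_repr (n2%:Z * a) c (qscale n A).
    apply: (scale_repr RA _ (erefl _) c1 n1n0). by rewrite En PoszM.
  have RB' : reduced_repr (n1%:Z * b) d (qscale n B).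
    apply: (scale_repr RB _ (erefl _) c2 n2n0). by rewrite En PoszM mulrC.
  rewrite /farey_nbr_n (nbr_repr RA' RB').
  rewrite -X; congr (`|_|); ring.
Qed.
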